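(* Let $\gamma\in(1,3)$ and $\mu\in(0,1)$. At the point $B=(U_B,H_B)=(1,0)$ there exist two distinct branches of integral curves of $\frac{dH}{dU}=\frac{F(H,U)}{G(H,U)}$, with slopes $C_1(U_B,H_B)=0$ and $C_2(U_B,H_B)=\frac{\gamma(1-\mu)}{1+k_2}$. Moreover, there exists exactly one integral curve passing through $B$ along each of these branches, both integral curves are smooth at $B$, and the integral curve corresponding to the slope $0$ is precisely $H\equiv0$.
   Context: $k_1=\frac{(\gamma+1)+\mu(3-\gamma)}{2}$, $k_2=\frac{2(1-\mu)}{\gamma-1}$, $F(H,U)=2H[H-(U^2-k_1U+\mu)]$, $G(H,U)=H(U+k_2)-U(U-1)(U-\mu)$. Integral curves through $B$ are trajectories of $\frac{dH}{ds}=F$, $\frac{dU}{ds}=G$ converging to the equilibrium $B$ (where $F=G=0$ and $(U-1)^2-H=0$). *)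

(* Defs.v *)
From Stdlib Require Import Reals.
From Coquelicot Require Import Coquelicot.
Open Scope R_scope.

Definition k1 (gamma mu : R) : R := ((gamma + 1) + mu * (3 - gamma)) / 2.
Definition k2 (gamma mu : R) : R := 2 * (1 - mu) / (gamma - 1).

Definition Ffun (gamma mu H U : R) : R :=
  2 * H * (H - (U ^ 2 - k1 gamma mu * U + mu)).
Definition Gfun (gamma mu H U : R) : R :=
  H * (U + k2 gamma mu) - U * (U - 1) * (U - mu).

(* A (local) integral curve of dH/dU = F(H,U)/G(H,U) through B = (U,H) = (1,0),
   given as a graph H = h(U) on (1 - delta, 1 + delta): h(1) = 0, h is
   differentiable on the interval (so the curve has a tangent slope h'(1) at B),
   and away from B the ODE holds (with G <> 0 there). *)
Definition integral_curve_through_B (gamma mu delta : R) (h : R -> R) : Prop :=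
  0 < delta /\
  h 1 = 0 /\
  (forall U, Rabs (U - 1) < delta -> ex_derive h U) /\
  (forall U, 0 < Rabs (U - 1) < delta ->
     Gfun gamma mu (h U) U <> 0 /\
     Derive h U = Ffun gamma mu (h U) U / Gfun gamma mu (h U) U).

Definition smooth_near_1 (delta : R) (h : R -> R) : Prop :=
  forall (n : nat) U, Rabs (U - 1) < delta -> ex_derive_n h n U.

(* Main.v *)
Require Import Defs.
From Stdlib Require Import Reals.
From Coquelicot Require Import Coquelicot.
From Stdlib Require Import Psatz Lia Lra.
Open Scope R_scope.

Lemma is_lim_mult' (f g : R -> R) (x : Rbar) (lf lg : R) :
  is_lim f x lf -> is_lim g x lg -> is_lim (fun y => f y * g y) x (lf * lg).
Proof.
  intros Hf Hg. apply (is_lim_mult f g x lf lg Hf Hg). simpl; auto.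
Qed.

Lemma is_lim_val (f : R -> R) (x : Rbar) (l l' : R) :
  is_lim f x l -> l = l' -> is_lim f x l'.
Proof. intros H ->; exact H. Qed.

Ltac lim_tac :=
  repeat first
   [ eassumption
   | apply is_lim_id
   | apply is_lim_const
   | apply is_lim_minus'
   | apply is_lim_plus'
   | apply is_lim_mult' ].

Lemma lim_eps (f : R -> R) (L : R) :
  is_lim f 1 L -> forall eps, 0 < eps ->
  exists d, 0 < d /\ forall y, 0 < Rabs (y - 1) < d -> Rabs (f y - L) < eps.
Proof.
  intros H eps Heps.
  apply is_lim_spec in H.
  destruct (H (mkposreal eps Heps)) as [d Hd].
  exists d. split. apply cond_pos.
  intros y [Hy1 Hy2]. apply Hd.
  - unfold ball; simpl; unfold AbsRing_ball, abs, minus, plus, opp; simpl. 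
    replace (y + - 1) with (y - 1) by ring. exact Hy2.
  - intro E; subst. rewrite Rminus_eq_0, Rabs_R0 in Hy1. lra.
Qed.

Lemma lim_diffq (h : R -> R) (m : R) :
  h 1 = 0 -> is_derive h 1 m -> is_lim (fun y => h y / (y - 1)) 1 m.
Proof.
  intros H0 Hd. apply is_derive_Reals in Hd.
  apply is_lim_spec. intros eps.
  destruct (Hd eps (cond_pos eps)) as [d Hdd].
  exists d. intros y Hy Hne. change R in y.
  unfold ball in Hy; simpl in Hy; unfold AbsRing_ball, abs, minus, plus, opp in Hy; simpl in Hy.
  assert (Hk : y - 1 <> 0) by (intro; apply Hne; lra).
  specialize (Hdd (y - 1) Hk). replace (1 + (y - 1)) with y in Hdd by ring.
  rewrite H0, Rminus_0_r in Hdd. apply Hdd. exact Hy.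
Qed.

Lemma ex_derive_cont (h : R -> R) (x : R) : ex_derive h x -> continuity_pt h x.
Proof.
  intros Hd. apply derivable_continuous_pt. exists (Derive h x).
  apply is_derive_Reals, Derive_correct, Hd.
Qed.

Lemma lim_cont (h : R -> R) : ex_derive h 1 -> is_lim h 1 (h 1).
Proof.
  intros Hd. apply is_lim_continuity. apply ex_derive_cont. exact Hd.
Qed.


Lemma lim_neg (f : R -> R) (L : R) : is_lim f 1 L -> L < 0 ->
  exists d, 0 < d /\ forall y, 0 < Rabs (y - 1) < d -> f y < 0.
Proof.
  intros H HL. destruct (lim_eps f L H (-L)) as [d [Hd Hy]]; [lra|].
  exists d; split; auto. intros y Hy'. specialize (Hy y Hy').
  apply Rabs_def2 in Hy. lra.
Qed.

Lemma lim_pos (f : R -> R) (L : R) : is_lim f 1 L -> 0 < L ->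
  exists d, 0 < d /\ forall y, 0 < Rabs (y - 1) < d -> 0 < f y.
Proof.
  intros H HL. destruct (lim_eps f L H L) as [d [Hd Hy]]; [lra|].
  exists d; split; auto. intros y Hy'. specialize (Hy y Hy').
  apply Rabs_def2 in Hy. lra.
Qed.

Lemma k2_pos gamma mu : 1 < gamma < 3 -> 0 < mu < 1 -> 0 < k2 gamma mu.
Proof. intros; unfold k2. apply Rdiv_lt_0_compat; lra. Qed.

Lemma k1_rel gamma mu : 1 - k1 gamma mu + mu = - ((gamma - 1) * (1 - mu)) / 2.
Proof. unfold k1; field. Qed.

Lemma curve_derive gamma mu delta h U : integral_curve_through_B gamma mu delta h ->
  Rabs (U - 1) < delta -> is_derive h U (Derive h U).
Proof.
  intros [Hd [H0 [Hex _]]] HU. apply Derive_correct, Hex, HU.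
Qed.

Lemma uniq gamma mu delta1 h1 delta2 h2 m :
  1 < gamma < 3 -> 0 < mu < 1 ->
  integral_curve_through_B gamma mu delta1 h1 ->
  integral_curve_through_B gamma mu delta2 h2 ->
  Derive h1 1 = m -> Derive h2 1 = m ->
  m * (1 + k2 gamma mu) - (1 - mu) <> 0 ->
  exists eps, 0 < eps /\ forall U, Rabs (U - 1) < eps -> h1 U = h2 U.
Proof.
  intros Hg Hm C1 C2 Hm1 Hm2 Hg0.
  pose proof C1 as [Hd1 [H10 [Hex1 Hode1]]].
  pose proof C2 as [Hd2 [H20 [Hex2 Hode2]]].
  set (k1' := k1 gamma mu) in *. set (k2' := k2 gamma mu) in *.
  set (r1 := fun y => h1 y / (y - 1)).
  set (r2 := fun y => h2 y / (y - 1)).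
  assert (Lr1 : is_lim r1 1 m).
  { apply lim_diffq; auto. rewrite <- Hm1. apply Derive_correct, Hex1. rewrite Rminus_eq_0, Rabs_R0; lra. }
  assert (Lr2 : is_lim r2 1 m).
  { apply lim_diffq; auto. rewrite <- Hm2. apply Derive_correct, Hex2. rewrite Rminus_eq_0, Rabs_R0; lra. }
  assert (Lh1 : is_lim h1 1 0).
  { rewrite <- H10. apply lim_cont, Hex1. rewrite Rminus_eq_0, Rabs_R0; lra. }
  assert (Lh2 : is_lim h2 1 0).
  { rewrite <- H20. apply lim_cont, Hex2. rewrite Rminus_eq_0, Rabs_R0; lra. }
  set (Qx := fun y => 2 * r1 y * h2 y * (y + k2') - 2 * (y * (y - mu)) * (h1 y + h2 y)
                      + 2 * (y * y - k1' * y + mu) * (y * (y - mu))).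
  set (G1 := fun y => r1 y * (y + k2') - y * (y - mu)).
  set (G2 := fun y => r2 y * (y + k2') - y * (y - mu)).
  assert (LQ : is_lim Qx 1 (- ((gamma - 1) * (1 - mu) * (1 - mu)))).
  { eapply is_lim_val. unfold Qx. lim_tac.
    pose proof (k1_rel gamma mu). fold k1' in H. 
    replace (1 * 1 - k1' * 1 + mu) with (1 - k1' + mu) by ring. rewrite H. field. }
  assert (LG : is_lim (fun y => G1 y * G2 y) 1 ((m * (1 + k2') - (1 - mu)) * (m * (1 + k2') - (1 - mu)))).
  { eapply is_lim_val. unfold G1, G2. lim_tac. ring. }
  destruct (lim_neg _ _ LQ) as [e1 [He1 HQ]].
  { assert (0 < (gamma - 1) * (1 - mu) * (1 - mu)) by (apply Rmult_lt_0_compat; [apply Rmult_lt_0_compat|]; lra). lra. }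
  destruct (lim_pos _ _ LG) as [e2 [He2 HG]].
  { assert (0 < (m * (1 + k2') - (1 - mu)) * (m * (1 + k2') - (1 - mu))) by (apply Rsqr_pos_lt; exact Hg0). lra. }
  set (eps := Rmin (Rmin e1 e2) (Rmin delta1 delta2)).
  assert (Heps : 0 < eps) by (unfold eps; repeat apply Rmin_pos; auto).
  assert (Ee : eps <= e1 /\ eps <= e2 /\ eps <= delta1 /\ eps <= delta2).
  { unfold eps. repeat split.
    - eapply Rle_trans; [apply Rmin_l|apply Rmin_l].
    - eapply Rle_trans; [apply Rmin_l|apply Rmin_r].
    - eapply Rle_trans; [apply Rmin_r|apply Rmin_l].
    - eapply Rle_trans; [apply Rmin_r|apply Rmin_r]. }
  destruct Ee as (Ee1 & Ee2 & Ee3 & Ee4).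
  set (D := fun y => (h1 y - h2 y) * (h1 y - h2 y)).
  set (D' := fun y => 2 * (h1 y - h2 y) * (Derive h1 y - Derive h2 y)).
  assert (HD : forall y, Rabs (y - 1) < eps -> derivable_pt_lim D y (D' y)).
  { intros y Hy. apply is_derive_Reals. unfold D, D'.
    assert (E1 : ex_derive h1 y) by (apply Hex1; lra).
    assert (E2 : ex_derive h2 y) by (apply Hex2; lra).
    auto_derive; auto. change (fun x => h1 x) with h1; change (fun x => h2 x) with h2; ring. }
  assert (Hsign : forall y, Rabs (y - 1) < eps -> D' y * (y - 1) <= 0).
  { intros y Hy. destruct (Req_dec y 1) as [->|Hne].
    - rewrite Rminus_eq_0, Rmult_0_r. lra.
    - assert (Hy0 : 0 < Rabs (y - 1)) by (apply Rabs_pos_lt; lra).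
      assert (Hx : y - 1 <> 0) by lra.
      assert (Y1 : 0 < Rabs (y - 1) < delta1) by lra.
      assert (Y2 : 0 < Rabs (y - 1) < delta2) by lra.
      assert (Y3 : 0 < Rabs (y - 1) < e1) by lra.
      assert (Y4 : 0 < Rabs (y - 1) < e2) by lra.
      destruct (Hode1 y Y1) as [Gn1 Ed1].
      destruct (Hode2 y Y2) as [Gn2 Ed2].
      specialize (HQ y Y3). specialize (HG y Y4).
      assert (Hg1 : G1 y <> 0) by (intro E; rewrite E in HG; lra).
      assert (Hg2 : G2 y <> 0) by (intro E; rewrite E in HG; lra).
      assert (Key : D' y * (y - 1) = 2 * ((h1 y - h2 y) * (h1 y - h2 y)) * Qx y / (G1 y * G2 y)).
      { unfold D'. rewrite Ed1, Ed2. unfold Qx, G1, G2, r1, r2 in *.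
        unfold Ffun, Gfun in *. unfold k1', k2' in *. field. repeat split; [exact Hx | intro E; apply Gn2; rewrite <- E; ring | intro E; apply Gn1; rewrite <- E; ring]. }
      rewrite Key. unfold Rdiv. 
      assert (HA0 : 0 <= (h1 y - h2 y) * (h1 y - h2 y)) by (pose proof (Rle_0_sqr (h1 y - h2 y)); unfold Rsqr in *; lra).
      assert (HI0 : 0 < / (G1 y * G2 y)) by (apply Rinv_0_lt_compat; auto).
      revert HA0 HI0 HQ. generalize (Qx y) ((h1 y - h2 y) * (h1 y - h2 y)) (/ (G1 y * G2 y)).
      intros q A i HA Hi Hq. clear -HA Hi Hq. assert (0 <= A * i) by (apply Rmult_le_pos; lra). nra. }
  exists eps. split; auto.
  intros U HU.
  assert (HD1 : D 1 = 0) by (unfold D; rewrite H10, H20; ring).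
  assert (HDU : D U <= 0).
  { destruct (Rtotal_order U 1) as [Hlt|[Heq|Hgt]].
    - destruct (MVT_cor2 D D' U 1 Hlt) as [xi [Exi Hxi]].
      { intros c0 Hc0. apply HD. apply Rabs_def1; apply Rabs_def2 in HU; lra. }
      assert (Hxe : Rabs (xi - 1) < eps) by (apply Rabs_def1; apply Rabs_def2 in HU; lra).
      assert (Hs := Hsign xi Hxe).
      assert (D' xi >= 0) by nra. nra.
    - subst; lra.
    - destruct (MVT_cor2 D D' 1 U Hgt) as [xi [Exi Hxi]].
      { intros c0 Hc0. apply HD. apply Rabs_def1; apply Rabs_def2 in HU; lra. }
      assert (Hxe : Rabs (xi - 1) < eps) by (apply Rabs_def1; apply Rabs_def2 in HU; lra).
      assert (Hs := Hsign xi Hxe).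
      assert (D' xi <= 0) by nra. nra. }
  unfold D in HDU. nra.
Qed.


Lemma classify gamma mu delta h :
  1 < gamma < 3 -> 0 < mu < 1 ->
  integral_curve_through_B gamma mu delta h ->
  let m := Derive h 1 in
  m * (m * (1 + k2 gamma mu) - (1 - mu)) = m * ((gamma - 1) * (1 - mu)).
Proof.
  intros Hg Hm C m.
  pose proof C as [Hd [H0 [Hex Hode]]].
  set (k1' := k1 gamma mu) in *. set (k2' := k2 gamma mu) in *.
  set (r := fun y => h y / (y - 1)).
  assert (H1 : Rabs (1 - 1) < delta) by (rewrite Rminus_eq_0, Rabs_R0; lra).
  assert (Lr : is_lim r 1 m).
  { apply lim_diffq; auto. apply Derive_correct, Hex, H1. }
  assert (Lh : is_lim h 1 0).
  { rewrite <- H0. apply lim_cont, Hex, H1. }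
  set (Gx := fun y => r y * (y + k2') - y * (y - mu)).
  set (Fx := fun y => 2 * r y * (h y - (y * y - k1' * y + mu))).
  set (g0 := m * (1 + k2') - (1 - mu)).
  set (a := (gamma - 1) * (1 - mu)).
  assert (LG : is_lim Gx 1 g0).
  { eapply is_lim_val. unfold Gx. lim_tac. unfold g0. ring. }
  assert (LF : is_lim Fx 1 (m * a)).
  { eapply is_lim_val. unfold Fx. lim_tac.
    pose proof (k1_rel gamma mu). fold k1' in H.
    replace (1 * 1 - k1' * 1 + mu) with (1 - k1' + mu) by ring. rewrite H. unfold a. field. }
  destruct (Req_dec (m * g0) (m * a)) as [E|NE]; [exact E|exfalso].
  set (Dl := Rabs (m * g0 - m * a)).
  assert (HDl : 0 < Dl) by (apply Rabs_pos_lt; lra).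
  set (K := Rabs m + Rabs g0 + 2).
  assert (HK : 0 < K) by (unfold K; pose proof (Rabs_pos m); pose proof (Rabs_pos g0); lra).
  set (e := Rmin 1 (Dl / (2 * K))).
  assert (He : 0 < e) by (unfold e; apply Rmin_pos; [lra | apply Rdiv_lt_0_compat; lra]).
  assert (He1 : e <= 1) by apply Rmin_l.
  assert (He2 : e <= Dl / (2 * K)) by apply Rmin_r.
  destruct (lim_eps _ _ Lr e He) as [d1 [Hd1 B1]].
  destruct (lim_eps _ _ LG e He) as [d2 [Hd2 B2]].
  destruct (lim_eps _ _ LF e He) as [d3 [Hd3 B3]].
  set (eta := Rmin (Rmin d1 d2) (Rmin d3 delta)).
  assert (Heta : 0 < eta) by (unfold eta; repeat apply Rmin_pos; auto).
  assert (Ee : eta <= d1 /\ eta <= d2 /\ eta <= d3 /\ eta <= delta).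
  { unfold eta. repeat split.
    - eapply Rle_trans; [apply Rmin_l|apply Rmin_l].
    - eapply Rle_trans; [apply Rmin_l|apply Rmin_r].
    - eapply Rle_trans; [apply Rmin_r|apply Rmin_l].
    - eapply Rle_trans; [apply Rmin_r|apply Rmin_r]. }
  destruct Ee as (Ee1 & Ee2 & Ee3 & Ee4).
  set (V := 1 + eta / 2).
  assert (HV : 1 < V) by (unfold V; lra).
  destruct (MVT_cor2 h (Derive h) 1 V HV) as [xi [Exi Hxi]].
  { intros c0 Hc0. apply is_derive_Reals, Derive_correct, Hex.
    rewrite Rabs_pos_eq; unfold V in *; lra. }
  assert (Hx1 : 0 < Rabs (xi - 1)) by (rewrite Rabs_pos_eq; lra).
  assert (Hx2 : Rabs (xi - 1) = xi - 1) by (rewrite Rabs_pos_eq; lra).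
  assert (HV1 : Rabs (V - 1) = V - 1) by (rewrite Rabs_pos_eq; lra).
  assert (HVd : 0 < Rabs (V - 1) < d1) by (rewrite HV1; unfold V; lra).
  assert (Hxd2 : 0 < Rabs (xi - 1) < d2) by (rewrite Hx2; unfold V in *; lra).
  assert (Hxd3 : 0 < Rabs (xi - 1) < d3) by (rewrite Hx2; unfold V in *; lra).
  assert (Hxd : 0 < Rabs (xi - 1) < delta) by (rewrite Hx2; unfold V in *; lra).
  specialize (B1 V HVd). specialize (B2 xi Hxd2). specialize (B3 xi Hxd3).
  destruct (Hode xi Hxd) as [Gn Ed].
  assert (Hrel : r V * Gx xi = Fx xi).
  { assert (EV : r V = Derive h xi).
    { unfold r. rewrite H0, Rminus_0_r in Exi. rewrite Exi. field. lra. }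
    rewrite EV, Ed. unfold Gx, Fx, r. unfold Ffun, Gfun in *. unfold k1', k2' in *.
    field. split; [lra|]. intro E; apply Gn; rewrite <- E; ring. }
  assert (Iden : m * g0 - m * a = m * (g0 - Gx xi) + Gx xi * (m - r V) + (Fx xi - m * a)).
  { rewrite <- Hrel. ring. }
  assert (Bnd : Dl <= Rabs m * e + (Rabs g0 + 1) * e + e).
  { unfold Dl. rewrite Iden.
    eapply Rle_trans; [apply Rabs_triang|].
    eapply Rle_trans; [apply Rplus_le_compat_r; apply Rabs_triang|].
    rewrite !Rabs_mult.
    assert (A1 : Rabs (g0 - Gx xi) <= e) by (rewrite Rabs_minus_sym; lra).
    assert (A2 : Rabs (m - r V) <= e) by (rewrite Rabs_minus_sym; lra).
    assert (A3 : Rabs (Gx xi) <= Rabs g0 + 1).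
    { replace (Gx xi) with (g0 + (Gx xi - g0)) by ring.
      eapply Rle_trans; [apply Rabs_triang|]. lra. }
    pose proof (Rabs_pos m). pose proof (Rabs_pos (Gx xi)). pose proof (Rabs_pos (m - r V)).
    apply Rplus_le_compat; [apply Rplus_le_compat|lra].
    - apply Rmult_le_compat_l; auto.
    - apply Rmult_le_compat; auto. }
  assert (Dl <= K * e) by (unfold K; lra).
  assert (K * e <= Dl / 2).
  { apply Rle_trans with (K * (Dl / (2 * K))). apply Rmult_le_compat_l; lra.
    right. field. lra. }
  lra.
Qed.


Definition wt (g : nat -> R) (i : nat) : R := INR (S i) * g i.
Definition Cs (g : nat -> R) (n : nat) : R := PS_mult g g n.
Definition Ds (g : nat -> R) (n : nat) : R := PS_mult (wt g) g n.
Definition tr (g : nat -> R) (k : nat) (i : nat) : R := if Nat.ltb i k then g i else 0.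
Definition prev (g : nat -> R) (n : nat) : R := match n with O => 0 | S k => g k end.
Definition Nf (b c kap : R) (g : nat -> R) (n : nat) : R :=
  2 * Cs g n - Ds g n - b * Ds (tr g (S n)) (S n)
  + ((1 + c) * INR (S n) - 2 * kap) * g n + (INR n - 2) * prev g n.
Definition Lf (a c : R) (n : nat) : R := a * (INR n + 2) + c.

Fixpoint tab (a b c kap beta : R) (n : nat) : nat -> R :=
  match n with
  | O => fun _ => beta
  | S k => fun i => if Nat.eqb i (S k) then Nf b c kap (tab a b c kap beta k) k / Lf a c k
                    else tab a b c kap beta k i
  end.

Definition useq (a b c kap beta : R) (n : nat) : R := tab a b c kap beta n n.

Lemma tab_stable a b c kap beta : forall n i, (i <= n)%nat ->
  tab a b c kap beta n i = useq a b c kap beta i.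
Proof.
  induction n as [|n IH]; intros i Hi.
  - assert (i = 0%nat) by lia. subst. reflexivity.
  - simpl. destruct (Nat.eqb_spec i (S n)) as [E|E].
    + subst. unfold useq. simpl. rewrite Nat.eqb_refl. reflexivity.
    + apply IH. lia.
Qed.

Lemma PS_mult_ext (f g f' g' : nat -> R) n :
  (forall i, (i <= n)%nat -> f i = f' i /\ g i = g' i) -> PS_mult f g n = PS_mult f' g' n.
Proof.
  intros H. unfold PS_mult. apply sum_eq. intros i Hi.
  destruct (H i Hi) as [-> _]. destruct (H (n - i)%nat ltac:(lia)) as [_ ->]. reflexivity.
Qed.

Lemma Nf_ext b c kap f g n : (forall i, (i <= n)%nat -> f i = g i) -> Nf b c kap f n = Nf b c kap g n.
Proof.
  intros H. unfold Nf, Cs, Ds.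
  rewrite (PS_mult_ext f f g g n) by (intros; split; apply H; auto).
  rewrite (PS_mult_ext (wt f) f (wt g) g n) by (intros; unfold wt; split; rewrite H; auto).
  rewrite (PS_mult_ext (wt (tr f (S n))) (tr f (S n)) (wt (tr g (S n))) (tr g (S n)) (S n)).
  2:{ intros i Hi. unfold wt, tr. destruct (Nat.ltb_spec i (S n)); [rewrite H by lia|]; auto. }
  rewrite H by lia. destruct n as [|n]; simpl; [reflexivity|]. rewrite H by lia. reflexivity.
Qed.

Lemma useq_0 a b c kap beta : useq a b c kap beta 0 = beta.
Proof. reflexivity. Qed.

Lemma useq_S a b c kap beta n :
  useq a b c kap beta (S n) = Nf b c kap (useq a b c kap beta) n / Lf a c n.
Proof.
  unfold useq at 1. simpl. rewrite Nat.eqb_refl. f_equal.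
  apply Nf_ext. intros i Hi. apply tab_stable. auto.
Qed.

Lemma sum_ends (f f' : nat -> R) n : (0 < n)%nat ->
  (forall i, (0 < i < n)%nat -> f i = f' i) ->
  sum_f_R0 f n = sum_f_R0 f' n + (f 0%nat - f' 0%nat) + (f n - f' n).
Proof.
  intros Hn H. destruct n as [|n]; [lia|].
  rewrite !tech5.
  destruct n as [|n].
  - simpl. ring.
  - rewrite (decomp_sum f (S n)) by lia. rewrite (decomp_sum f' (S n)) by lia. simpl pred.
    rewrite (sum_eq (fun i => f (S i)) (fun i => f' (S i)) n).
    + ring.
    + intros i Hi. apply H. lia.
Qed.

Lemma Ds_S_split g n :
  Ds g (S n) = wt g 0 * g (S n) + wt g (S n) * g 0%nat + Ds (tr g (S n)) (S n).
Proof.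
  unfold Ds, PS_mult.
  rewrite (sum_ends _ (fun k => wt (tr g (S n)) k * tr g (S n) (S n - k)%nat) (S n)); [|lia|].
  - unfold wt, tr. rewrite Nat.sub_0_r, Nat.sub_diag. simpl Nat.ltb.
    rewrite Nat.ltb_irrefl. ring.
  - intros i Hi. unfold wt, tr. 
    destruct (Nat.ltb_spec i (S n)); [|lia].
    destruct (Nat.ltb_spec (S n - i) (S n)); [|lia]. reflexivity.
Qed.

Definition eseq (a b c kap : R) (u : nat -> R) (n : nat) : R :=
  PS_incr_1 (Ds u) n + b * Ds u n - c * wt u n - (1 + c) * PS_incr_1 (wt u) n
  - PS_incr_1 (PS_incr_1 (wt u)) n - 2 * PS_incr_1 (Cs u) n
  + 2 * PS_incr_1 (PS_incr_1 u) n + 2 * kap * PS_incr_1 u n - a * u n.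

Lemma eseq_zero a b c kap beta n :
  b * beta = a + c -> 0 < a -> 0 < c ->
  eseq a b c kap (useq a b c kap beta) n = 0.
Proof.
  intros Hb Ha Hc. set (u := useq a b c kap beta).
  destruct n as [|n].
  - unfold eseq. simpl. unfold Ds, wt, PS_mult. simpl. unfold u; rewrite useq_0.
    change (zero : R) with 0. simpl. nra.
  - unfold eseq. simpl PS_incr_1.
    assert (EL : Lf a c n <> 0).
    { unfold Lf. pose proof (pos_INR n). nra. }
    assert (Eu : u (S n) = Nf b c kap u n / Lf a c n) by (unfold u; apply useq_S).
    rewrite Ds_S_split.
    assert (Eu' : u (S n) * Lf a c n = Nf b c kap u n) by (rewrite Eu; field; auto).
    unfold Nf in Eu'. 
    assert (Hp : PS_incr_1 (wt u) n = INR n * prev u n).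
    { destruct n; simpl. change (zero : R) with 0. ring. unfold wt. reflexivity. }
    assert (Hp2 : PS_incr_1 u n = prev u n).
    { destruct n; simpl; reflexivity. }
    rewrite Hp, Hp2. unfold wt in *. unfold Lf in Eu'. rewrite !S_INR in *.
    assert (u 0%nat = beta) by (unfold u; apply useq_0). rewrite H in *.
    simpl INR in *. 
    replace (b * ((0 + 1) * beta * u (S n) + (INR n + 1 + 1) * u (S n) * beta +
          Ds (tr u (S n)) (S n))) with
       (u (S n) * (b * beta) * (INR n + 3) + b * Ds (tr u (S n)) (S n)) by ring.
    rewrite Hb. lra.
Qed.


Lemma sum_rev (f : nat -> R) n : sum_f_R0 (fun i => f (n - i)%nat) n = sum_f_R0 f n.
Proof.
  induction n as [|n IH].
  - simpl. reflexivity.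
  - rewrite decomp_sum by lia. simpl pred. rewrite tech5.
    rewrite Nat.sub_0_r.
    transitivity (f (S n) + sum_f_R0 (fun i => f (n - i)%nat) n).
    + f_equal.
    + rewrite IH. ring.
Qed.

Lemma sum_inv_sq n : sum_f_R0 (fun i => / (INR i + 1) ^ 2) n <= 2 - / (INR n + 1).
Proof.
  induction n as [|n IH].
  - simpl. lra.
  - rewrite tech5. rewrite S_INR.
    pose proof (pos_INR n).
    assert (/ (INR n + 1 + 1) ^ 2 <= / (INR n + 1) - / (INR n + 1 + 1)).
    { 
      replace (/ (INR n + 1) - / (INR n + 1 + 1)) with (/ ((INR n + 1) * (INR n + 1 + 1))) by (field; lra).
      apply Rinv_le_contravar. apply Rmult_lt_0_compat; lra. simpl; nra. }
    lra.
Qed.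

Lemma term_bound (p q : R) : 0 < p -> 0 < q ->
  / (p ^ 2 * q ^ 2) <= 2 / (p + q) ^ 2 * (/ p ^ 2 + / q ^ 2).
Proof.
  intros Hp Hq.
  replace (2 / (p + q) ^ 2 * (/ p ^ 2 + / q ^ 2)) with (2 * (p^2 + q^2) / ((p+q)^2 * (p^2 * q^2))) by (field; lra).
  replace (/ (p ^ 2 * q ^ 2)) with ((p + q)^2 / ((p+q)^2 * (p^2 * q^2))) by (field; lra).
  unfold Rdiv. apply Rmult_le_compat_r.
  - apply Rlt_le, Rinv_0_lt_compat. apply Rmult_lt_0_compat; [|apply Rmult_lt_0_compat]; apply pow_lt; lra.
  - simpl. pose proof (Rle_0_sqr (p - q)). unfold Rsqr in *. nra.
Qed.

Lemma S2 n : sum_f_R0 (fun i => / ((INR i + 1) ^ 2 * (INR (n - i) + 1) ^ 2)) n <= 8 / (INR n + 2) ^ 2.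
Proof.
  apply Rle_trans with (sum_f_R0 (fun i => 2 / (INR n + 2) ^ 2 * (/ (INR i + 1) ^ 2 + / (INR (n - i) + 1) ^ 2)) n).
  - apply sum_Rle. intros i Hi.
    replace (INR n + 2) with ((INR i + 1) + (INR (n - i) + 1)).
    + apply term_bound; pose proof (pos_INR i); pose proof (pos_INR (n - i)); lra.
    + rewrite minus_INR by lia. ring.
  - set (C := 2 / (INR n + 2) ^ 2).
    replace (sum_f_R0 (fun i => C * (/ (INR i + 1) ^ 2 + / (INR (n - i) + 1) ^ 2)) n)
      with (C * sum_f_R0 (fun i => / (INR i + 1) ^ 2 + / (INR (n - i) + 1) ^ 2) n)
      by (rewrite scal_sum; apply sum_eq; intros; ring).
    rewrite plus_sum. rewrite (sum_rev (fun i => / (INR i + 1) ^ 2) n).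
    pose proof (sum_inv_sq n). pose proof (pos_INR n).
    assert (0 < / (INR n + 1)) by (apply Rinv_0_lt_compat; lra).
    assert (0 < C) by (apply Rdiv_lt_0_compat; [lra| apply pow_lt; lra]).
    replace (8 / (INR n + 2) ^ 2) with (C * 4) by (unfold C; field; lra).
    apply Rmult_le_compat_l; lra.
Qed.

Definition Bnd (A M : R) (i : nat) : R := A * M ^ i / (INR i + 1) ^ 2.

Lemma PS_mult_bound (f g F G : nat -> R) n :
  (forall i, (i <= n)%nat -> Rabs (f i) <= F i) ->
  (forall i, (i <= n)%nat -> Rabs (g i) <= G i) ->
  Rabs (PS_mult f g n) <= PS_mult F G n.
Proof.
  intros Hf Hg. unfold PS_mult.
  eapply Rle_trans; [apply sum_f_R0_triangle|].
  apply sum_Rle. intros i Hi. rewrite Rabs_mult.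
  apply Rmult_le_compat; try apply Rabs_pos; auto. apply Hg; lia.
Qed.

Lemma conv_bound (f g : nat -> R) (A M K : R) n :
  0 <= A -> 0 < M -> 0 <= K ->
  (forall i, (i <= n)%nat -> Rabs (f i) <= K * Bnd A M i) ->
  (forall i, (i <= n)%nat -> Rabs (g i) <= Bnd A M i) ->
  Rabs (PS_mult f g n) <= K * (8 * A ^ 2 * M ^ n / (INR n + 2) ^ 2).
Proof.
  intros HA HM HK Hf Hg.
  eapply Rle_trans; [apply (PS_mult_bound f g (fun i => K * Bnd A M i) (Bnd A M)); auto|].
  unfold PS_mult, Bnd.
  replace (sum_f_R0 (fun k => K * (A * M ^ k / (INR k + 1) ^ 2) * (A * M ^ (n - k) / (INR (n - k) + 1) ^ 2)) n)
    with (K * A ^ 2 * M ^ n * sum_f_R0 (fun i => / ((INR i + 1) ^ 2 * (INR (n - i) + 1) ^ 2)) n).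
  - pose proof (S2 n).
    replace (K * (8 * A ^ 2 * M ^ n / (INR n + 2) ^ 2)) with (K * A ^ 2 * M ^ n * (8 / (INR n + 2) ^ 2)) by (field; pose proof (pos_INR n); lra).
    apply Rmult_le_compat_l; auto.
    apply Rmult_le_pos; [apply Rmult_le_pos; [auto| apply pow_le; auto]|apply pow_le; lra].
  - rewrite scal_sum. apply sum_eq. intros i Hi.
    replace (M ^ n) with (M ^ i * M ^ (n - i)) by (rewrite <- pow_add; f_equal; lia).
    pose proof (pos_INR i). pose proof (pos_INR (n - i)). field. lra.
Qed.

Definition zt (g : nat -> R) (k : nat) (i : nat) : R := if Nat.eqb i 0 then 0 else tr g k i.

Lemma Cs_split g n : (1 <= n)%nat -> Cs g n = Cs (zt g (S n)) n + 2 * g 0%nat * g n.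
Proof.
  intros Hn. unfold Cs, PS_mult.
  rewrite (sum_ends _ (fun k => zt g (S n) k * zt g (S n) (n - k)%nat) n); [|lia|].
  - unfold zt, tr. rewrite Nat.sub_0_r, Nat.sub_diag. simpl Nat.eqb.
    destruct (Nat.eqb_spec n 0); [lia|]. 
    destruct (Nat.ltb_spec n (S n)); [|lia]. ring.
  - intros i Hi. unfold zt, tr.
    destruct (Nat.eqb_spec i 0); [lia|]. destruct (Nat.eqb_spec (n - i) 0); [lia|].
    destruct (Nat.ltb_spec i (S n)); [|lia].
    destruct (Nat.ltb_spec (n - i) (S n)); [|lia]. reflexivity.
Qed.

Lemma Ds_split g n : (1 <= n)%nat -> Ds g n = Ds (zt g (S n)) n + (INR n + 2) * g 0%nat * g n.
Proof.
  intros Hn. unfold Ds, PS_mult.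
  rewrite (sum_ends _ (fun k => wt (zt g (S n)) k * zt g (S n) (n - k)%nat) n); [|lia|].
  - unfold wt, zt, tr. rewrite Nat.sub_0_r, Nat.sub_diag. simpl Nat.eqb.
    destruct (Nat.eqb_spec n 0); [lia|]. 
    destruct (Nat.ltb_spec n (S n)); [|lia]. rewrite !S_INR. simpl INR. ring.
  - intros i Hi. unfold wt, zt, tr.
    destruct (Nat.eqb_spec i 0); [lia|]. destruct (Nat.eqb_spec (n - i) 0); [lia|].
    destruct (Nat.ltb_spec i (S n)); [|lia].
    destruct (Nat.ltb_spec (n - i) (S n)); [|lia]. reflexivity.
Qed.

Lemma Dtr_split g n : Ds (tr g (S n)) (S n) = Ds (zt g (S n)) (S n).
Proof.
  unfold Ds, PS_mult. apply sum_eq. intros i Hi. unfold wt, zt, tr.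
  destruct (Nat.eqb_spec i 0) as [->|Hi0].
  - rewrite Nat.sub_0_r. rewrite Nat.ltb_irrefl. ring.
  - destruct (Nat.eqb_spec (S n - i) 0) as [E|E].
    + assert (i = S n) by lia. subst. rewrite Nat.ltb_irrefl. ring.
    + reflexivity.
Qed.


Lemma div_le_compat (x y z : R) : 0 <= x -> 0 < z -> z <= y -> x / y <= x / z.
Proof.
  intros Hx Hz Hzy. unfold Rdiv. apply Rmult_le_compat_l; auto.
  apply Rinv_le_contravar; auto.
Qed.

Lemma final_ineq (a b c be ka A M t P Cv Dv DvS un uk : R) :
  0 < a -> 0 < b -> 0 < c -> A = a / (16 * b) -> 1 <= M ->
  24 * A + 6 * Rabs be + 2 * (1 + c) + 2 * Rabs ka + 1 <= a / 2 * M ->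
  2 <= t -> 0 < P ->
  Rabs Cv <= 8 * A ^ 2 * P / (t + 2) ^ 2 ->
  Rabs Dv <= (t + 1) * (8 * A ^ 2 * P / (t + 2) ^ 2) ->
  Rabs DvS <= (t + 2) * (8 * A ^ 2 * (M * P) / (t + 3) ^ 2) ->
  Rabs un <= A * P / (t + 1) ^ 2 ->
  Rabs uk <= A * (P / M) / t ^ 2 ->
  Rabs ((2 * (Cv + 2 * be * un) - (Dv + (t + 2) * be * un) - b * DvS
         + ((1 + c) * (t + 1) - 2 * ka) * un + (t - 2) * uk) / (a * (t + 2) + c))
  <= A * (M * P) / (t + 2) ^ 2.
Proof.
  intros Ha Hb Hc HA HM HK Ht HP B1 B2 B3 B4 B5.
  assert (HA0 : 0 < A) by (rewrite HA; apply Rdiv_lt_0_compat; lra).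
  set (s := A * P / (t + 2)).
  assert (Hs : 0 <= s) by (unfold s; apply Rlt_le, Rdiv_lt_0_compat; [apply Rmult_lt_0_compat|]; lra).
  assert (T1 : Rabs (2 * Cv) <= 16 * A * s).
  { rewrite Rabs_mult, Rabs_pos_eq by lra.
    assert (8 * A ^ 2 * P / (t + 2) ^ 2 <= 8 * A * s).
    { unfold s. replace (8 * A ^ 2 * P / (t + 2) ^ 2) with (8 * A * (A * P / (t + 2)) / (t + 2)) by (field; lra).
      unfold Rdiv at 1. rewrite <- (Rmult_1_r (8 * A * (A * P / (t + 2)))) at 2.
      apply Rmult_le_compat_l. apply Rmult_le_pos; [lra|]. fold s. lra.
      rewrite <- Rinv_1. apply Rinv_le_contravar; lra. }
    lra. }
  set (co := 4 * be - (t + 2) * be + (1 + c) * (t + 1) - 2 * ka).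
  assert (T2 : Rabs (co * un) <= (6 * Rabs be + 2 * (1 + c) + 2 * Rabs ka) * s).
  { rewrite Rabs_mult.
    assert (Hco : Rabs co <= 4 * Rabs be + (t + 2) * Rabs be + (1 + c) * (t + 1) + 2 * Rabs ka).
    { unfold co. 
      eapply Rle_trans; [apply Rabs_triang|].
      rewrite Rabs_Ropp, (Rabs_mult 2 ka), (Rabs_pos_eq 2) by lra.
      eapply Rle_trans; [apply Rplus_le_compat_r; apply Rabs_triang|].
      rewrite (Rabs_mult (1 + c)), (Rabs_pos_eq (1 + c)) by lra. rewrite (Rabs_pos_eq (t + 1)) by lra.
      eapply Rle_trans; [apply Rplus_le_compat_r; apply Rplus_le_compat_r; apply Rabs_triang|].
      rewrite Rabs_Ropp, !Rabs_mult, (Rabs_pos_eq 4), (Rabs_pos_eq (t + 2)) by lra. lra. }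
    pose proof (Rabs_pos be). pose proof (Rabs_pos ka). pose proof (Rabs_pos un).
    eapply Rle_trans. apply Rmult_le_compat; try apply Rabs_pos; [exact Hco| exact B4].
    unfold s.
    replace ((4 * Rabs be + (t + 2) * Rabs be + (1 + c) * (t + 1) + 2 * Rabs ka) * (A * P / (t + 1) ^ 2))
      with (A * P / (t + 2) * ((4 * Rabs be + (t + 2) * Rabs be + (1 + c) * (t + 1) + 2 * Rabs ka) * (t + 2) / (t + 1) ^ 2)) by (field; lra).
    rewrite (Rmult_comm (6 * Rabs be + _ + _)). apply Rmult_le_compat_l; [fold s; lra|].
    apply Rmult_le_reg_r with ((t + 1) ^ 2). apply pow_lt; lra.
    unfold Rdiv. rewrite Rmult_assoc, Rinv_l, Rmult_1_r by (apply pow_nonzero; lra).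
    simpl. nra. }
  assert (T3 : Rabs Dv <= 8 * A * s).
  { eapply Rle_trans; [exact B2|]. unfold s.
    replace ((t + 1) * (8 * A ^ 2 * P / (t + 2) ^ 2)) with (8 * A * (A * P / (t + 2)) * ((t + 1) / (t + 2))) by (field; lra).
    rewrite <- (Rmult_1_r (8 * A * (A * P / (t + 2)))) at 2.
    apply Rmult_le_compat_l. apply Rmult_le_pos; [lra|]. fold s; lra.
    apply Rmult_le_reg_r with (t + 2); [lra|]. unfold Rdiv. rewrite Rmult_assoc, Rinv_l by lra. lra. }
  assert (T4 : Rabs (b * DvS) <= a / 2 * M * s).
  { rewrite Rabs_mult, (Rabs_pos_eq b) by lra.
    eapply Rle_trans. apply Rmult_le_compat_l; [lra| exact B3].
    unfold s. rewrite HA.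
    replace (b * ((t + 2) * (8 * (a / (16 * b)) ^ 2 * (M * P) / (t + 3) ^ 2)))
      with (a / 2 * M * (a / (16 * b) * P / (t + 2)) * ((t + 2) ^ 2 / (t + 3) ^ 2)) by (field; lra).
    rewrite <- (Rmult_1_r (a / 2 * M * (a / (16 * b) * P / (t + 2)))) at 2.
    apply Rmult_le_compat_l.
    - assert (0 < a / (16 * b)) by (rewrite <- HA; lra).
      apply Rmult_le_pos; [apply Rmult_le_pos; lra|].
      apply Rlt_le, Rdiv_lt_0_compat; [apply Rmult_lt_0_compat|]; lra.
    - apply Rmult_le_reg_r with ((t + 3) ^ 2). apply pow_lt; lra.
      unfold Rdiv. rewrite Rmult_assoc, Rinv_l, Rmult_1_r by (apply pow_nonzero; lra). simpl. nra. }
  assert (T5 : Rabs ((t - 2) * uk) <= s).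
  { rewrite Rabs_mult, (Rabs_pos_eq (t - 2)) by lra.
    eapply Rle_trans. apply Rmult_le_compat_l; [lra| exact B5].
    unfold s.
    replace ((t - 2) * (A * (P / M) / t ^ 2)) with (A * P / (t + 2) * ((t - 2) * (t + 2) / (M * t ^ 2))) by (field; lra).
    rewrite <- (Rmult_1_r (A * P / (t + 2))) at 2.
    apply Rmult_le_compat_l; [fold s; lra|].
    apply Rmult_le_reg_r with (M * t ^ 2). apply Rmult_lt_0_compat; [lra| apply pow_lt; lra].
    unfold Rdiv. rewrite Rmult_assoc, Rinv_l, Rmult_1_r by (apply Rmult_integral_contrapositive; split; [lra| apply pow_nonzero; lra]).
    simpl. nra. }
  assert (EN : 2 * (Cv + 2 * be * un) - (Dv + (t + 2) * be * un) - b * DvS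
         + ((1 + c) * (t + 1) - 2 * ka) * un + (t - 2) * uk
         = 2 * Cv + co * un - Dv - b * DvS + (t - 2) * uk) by (unfold co; ring).
  rewrite EN.
  assert (TN : Rabs (2 * Cv + co * un - Dv - b * DvS + (t - 2) * uk) <= a * M * s).
  { replace (2 * Cv + co * un - Dv - b * DvS + (t - 2) * uk) with
      (2 * Cv + co * un + - Dv + - (b * DvS) + (t - 2) * uk) by ring.
    eapply Rle_trans; [apply Rabs_triang|].
    eapply Rle_trans; [apply Rplus_le_compat_r; apply Rabs_triang|].
    eapply Rle_trans; [apply Rplus_le_compat_r; apply Rplus_le_compat_r; apply Rabs_triang|].
    eapply Rle_trans; [apply Rplus_le_compat_r; apply Rplus_le_compat_r; apply Rplus_le_compat_r; apply Rabs_triang|].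
    rewrite !Rabs_Ropp.
    assert ((24 * A + 6 * Rabs be + 2 * (1 + c) + 2 * Rabs ka + 1) * s <= a / 2 * M * s)
      by (apply Rmult_le_compat_r; auto).
    lra. }
  unfold Rdiv at 1. rewrite Rabs_mult, (Rabs_pos_eq (/ _)).
  2:{ apply Rlt_le, Rinv_0_lt_compat. nra. }
  apply Rle_trans with (a * M * s / (a * (t + 2))).
  - unfold Rdiv. apply Rmult_le_compat; try apply Rabs_pos; auto.
    apply Rlt_le, Rinv_0_lt_compat; nra.
    apply Rinv_le_contravar; nra.
  - unfold s. right. field. lra.
Qed.


Lemma useq_bound a b c kap beta A M :
  0 < a -> 0 < b -> 0 < c -> A = a / (16 * b) -> 1 <= M ->
  24 * A + 6 * Rabs beta + 2 * (1 + c) + 2 * Rabs kap + 1 <= a / 2 * M ->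
  Rabs (useq a b c kap beta 1) <= Bnd A M 1 ->
  Rabs (useq a b c kap beta 2) <= Bnd A M 2 ->
  forall n j, (1 <= j <= n)%nat -> Rabs (useq a b c kap beta j) <= Bnd A M j.
Proof.
  intros Ha Hb Hc HA HM HK Hu1 Hu2.
  set (u := useq a b c kap beta).
  assert (HA0 : 0 < A) by (rewrite HA; apply Rdiv_lt_0_compat; lra).
  induction n as [|n IH]; intros j Hj; [lia|].
  destruct (Nat.eq_dec j (S n)) as [->|Hne]; [|apply IH; lia].
  destruct n as [|n]; [exact Hu1|].
  destruct n as [|n]; [exact Hu2|].
  set (N := S (S n)).
  assert (HN : (1 <= N)%nat) by (unfold N; lia).
  unfold u. rewrite useq_S. fold u. unfold Nf.
  rewrite (Cs_split u N HN), (Ds_split u N HN), (Dtr_split u N).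
  assert (E0 : u 0%nat = beta) by (unfold u; apply useq_0). rewrite E0.
  set (v := zt u (S N)).
  set (t := INR N). set (P := M ^ N).
  assert (Ht : 2 <= t) by (unfold t, N; rewrite !S_INR; pose proof (pos_INR n); lra).
  assert (HP : 0 < P) by (unfold P; apply pow_lt; lra).
  assert (Hv : forall i, (i <= S N)%nat -> Rabs (v i) <= Bnd A M i).
  { intros i Hi. unfold v, zt, tr.
    destruct (Nat.eqb_spec i 0) as [->|Hi0].
    - rewrite Rabs_R0. unfold Bnd. apply Rlt_le, Rdiv_lt_0_compat. apply Rmult_lt_0_compat; [lra| apply pow_lt; lra].
      apply pow_lt. pose proof (pos_INR 0); lra.
    - destruct (Nat.ltb_spec i (S N)).
      + apply IH. lia.
      + rewrite Rabs_R0. unfold Bnd. apply Rlt_le, Rdiv_lt_0_compat. apply Rmult_lt_0_compat; [lra| apply pow_lt; lra].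
        apply pow_lt. pose proof (pos_INR i); lra. }
  assert (BC : Rabs (Cs v N) <= 8 * A ^ 2 * P / (t + 2) ^ 2).
  { rewrite <- (Rmult_1_l (8 * A ^ 2 * P / (t + 2) ^ 2)).
    apply conv_bound; try lra; intros i Hi; [rewrite Rmult_1_l|]; apply Hv; lia. }
  assert (BD : Rabs (Ds v N) <= (t + 1) * (8 * A ^ 2 * P / (t + 2) ^ 2)).
  { apply conv_bound; try lra; intros i Hi; [|apply Hv; lia].
    unfold wt. rewrite Rabs_mult, Rabs_pos_eq by (apply pos_INR).
    apply Rmult_le_compat; try apply pos_INR; try apply Rabs_pos.
    - unfold t. rewrite S_INR. apply Rplus_le_compat_r, le_INR. lia.
    - apply Hv; lia. }
  assert (BDS : Rabs (Ds v (S N)) <= (t + 2) * (8 * A ^ 2 * (M * P) / (t + 3) ^ 2)).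
  { replace (t + 3) with (INR (S N) + 2) by (unfold t; rewrite S_INR; ring).
    replace (M * P) with (M ^ (S N)) by reflexivity.
    apply conv_bound; try lra; intros i Hi; [|apply Hv; lia].
    unfold wt. rewrite Rabs_mult, Rabs_pos_eq by (apply pos_INR).
    apply Rmult_le_compat; try apply pos_INR; try apply Rabs_pos.
    - unfold t. rewrite S_INR. assert (Hii : INR i <= INR (S N)) by (apply le_INR; lia). rewrite S_INR in Hii. lra.
    - apply Hv; lia. }
  assert (Bun : Rabs (u N) <= A * P / (t + 1) ^ 2) by (apply (IH N); unfold N; lia).
  assert (Buk : Rabs (u (S n)) <= A * (P / M) / t ^ 2).
  { replace (A * (P / M) / t ^ 2) with (Bnd A M (S n)).
    apply IH; lia. unfold Bnd, P, t, N. rewrite (S_INR (S n)).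
    change (M ^ S (S n)) with (M * M ^ S n). pose proof (pos_INR (S n)). field. split; lra. }
  unfold Bnd. fold t. fold P. unfold prev, N. fold N. unfold Lf. fold t.
  replace (INR (S N)) with (t + 1) by (unfold t; rewrite S_INR; ring).
  replace (INR N) with t by reflexivity.
  replace (M ^ S N) with (M * P) by reflexivity.
  replace (t + 1 + 1) with (t + 2) by ring.
  apply (final_ineq a b c beta kap A M t P); auto.
Qed.


Lemma CV_radius_wt u : CV_radius (wt u) = CV_radius u.
Proof.
  rewrite (CV_radius_ext (wt u) (PS_derive (PS_incr_1 u))) by (intros; reflexivity).
  rewrite CV_radius_derive. apply CV_radius_incr_1.
Qed.

Lemma pser (a : nat -> R) x : Rbar_lt (Rabs x) (CV_radius a) -> is_pseries a x (PSeries a x).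
Proof. intros H. apply PSeries_correct, CV_radius_inside, H. Qed.

Lemma series_identity a b c kap beta x :
  b * beta = a + c -> 0 < a -> 0 < c ->
  Rbar_lt (Rabs x) (CV_radius (useq a b c kap beta)) ->
  PSeries (wt (useq a b c kap beta)) x *
    (PSeries (useq a b c kap beta) x * (x + b) - (c + (1 + c) * x + x * x))
  = 2 * PSeries (useq a b c kap beta) x *
    (x * PSeries (useq a b c kap beta) x - (x * x + kap * x - a / 2)).
Proof.
  intros Hb Ha Hc Hx.
  set (u := useq a b c kap beta) in *.
  assert (Hxw : Rbar_lt (Rabs x) (CV_radius (wt u))) by (rewrite CV_radius_wt; exact Hx).
  set (Us := PSeries u x). set (Ws := PSeries (wt u) x).
  assert (PU : is_pseries u x Us) by (apply pser; auto).
  assert (PW : is_pseries (wt u) x Ws) by (apply pser; auto).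
  assert (PD : is_pseries (Ds u) x (Ws * Us)) by (apply is_pseries_mult; auto).
  assert (PC : is_pseries (Cs u) x (Us * Us)) by (apply is_pseries_mult; auto).
  assert (Hc1 : forall (k : R) (s : nat -> R) l, is_pseries s x l -> is_pseries (PS_scal k s) x (k * l)).
  { intros k s l H. apply (is_pseries_scal k s x l). apply Rmult_comm. exact H. }
  assert (Hi1 : forall (s : nat -> R) l, is_pseries s x l -> is_pseries (PS_incr_1 s) x (x * l)).
  { intros s l H. apply (is_pseries_incr_1 s x l H). }
  assert (Hp1 : forall (s1 s2 : nat -> R) l1 l2, is_pseries s1 x l1 -> is_pseries s2 x l2 ->
                 is_pseries (PS_plus s1 s2) x (l1 + l2)).
  { intros s1 s2 l1 l2 H1 H2. apply (is_pseries_plus s1 s2 x l1 l2 H1 H2). }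
  assert (PT : is_pseries (eseq a b c kap u) x
     (x * (Ws * Us) + (b * (Ws * Us) + (- c * Ws + (- (1 + c) * (x * Ws) + (-1 * (x * (x * Ws))
      + (-2 * (x * (Us * Us)) + (2 * (x * (x * Us)) + (2 * kap * (x * Us) + - a * Us))))))))).
  { eapply is_pseries_ext.
    2:{ apply Hp1. apply Hi1, PD.
        apply Hp1. apply Hc1, PD.
        apply Hp1. apply Hc1, PW.
        apply Hp1. apply Hc1, Hi1, PW.
        apply Hp1. apply Hc1, Hi1, Hi1, PW.
        apply Hp1. apply Hc1, Hi1, PC.
        apply Hp1. apply Hc1, Hi1, Hi1, PU.
        apply Hp1. apply Hc1, Hi1, PU.
        apply Hc1, PU. }
    intros n. unfold eseq, PS_plus, PS_scal. simpl. unfold plus, scal; simpl. unfold mult; simpl. ring. }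
  apply is_pseries_unique in PT.
  rewrite PSeries_ext with (b := fun _ => 0) in PT.
  2:{ intros n. apply eseq_zero; auto. }
  rewrite PSeries_const_0 in PT.
  lra.
Qed.


Lemma radius_bound (u : nat -> R) (A M B0 : R) :
  0 <= A -> 1 <= M ->
  Rabs (u 0%nat) <= B0 ->
  (forall j, (1 <= j)%nat -> Rabs (u j) <= Bnd A M j) ->
  Rbar_le (/ M) (CV_radius u).
Proof.
  intros HA HM H0 Hj.
  destruct (CV_radius_bounded u) as [Hub _].
  apply Hub. exists (B0 + A). intros n.
  rewrite Rabs_mult, (Rabs_pos_eq ((/ M) ^ n)) by (apply pow_le, Rlt_le, Rinv_0_lt_compat; lra).
  destruct n as [|n].
  - simpl. rewrite Rmult_1_r. lra.
  - specialize (Hj (S n) ltac:(lia)). unfold Bnd in Hj.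
    assert (Hp : 0 < (/ M) ^ S n) by (apply pow_lt, Rinv_0_lt_compat; lra).
    eapply Rle_trans. apply Rmult_le_compat_r; [lra| exact Hj].
    rewrite <- Rinv_pow by lra.
    pose proof (pos_INR (S n)).
    assert (0 < M ^ S n) by (apply pow_lt; lra).
    replace (A * M ^ S n / (INR (S n) + 1) ^ 2 * / M ^ S n) with (A / (INR (S n) + 1) ^ 2) by (field; lra).
    assert (A / (INR (S n) + 1) ^ 2 <= A).
    { unfold Rdiv. rewrite <- (Rmult_1_r A) at 2. apply Rmult_le_compat_l; auto.
      set (w := INR (S n) + 1). assert (1 <= w) by (unfold w; lra). clearbody w. rewrite <- Rinv_1. apply Rinv_le_contravar; [lra|]. simpl. nra. }
    pose proof (Rabs_pos (u 0%nat)). lra.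
Qed.

Lemma exists_C2 gamma mu : 1 < gamma < 3 -> 0 < mu < 1 ->
  exists delta h, integral_curve_through_B gamma mu delta h /\
    Derive h 1 = gamma * (1 - mu) / (1 + k2 gamma mu) /\ smooth_near_1 delta h.
Proof.
  intros Hg Hm.
  pose proof (k2_pos gamma mu Hg Hm) as Hk2.
  set (a := (gamma - 1) * (1 - mu)). set (b := 1 + k2 gamma mu). set (c := 1 - mu).
  set (kap := 2 - k1 gamma mu). set (beta := gamma * (1 - mu) / (1 + k2 gamma mu)).
  assert (Ha : 0 < a) by (unfold a; apply Rmult_lt_0_compat; lra).
  assert (Hb : 0 < b) by (unfold b; lra).
  assert (Hc : 0 < c) by (unfold c; lra).
  assert (Hbb : b * beta = a + c) by (unfold a, b, c, beta; field; lra).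
  set (u := useq a b c kap beta).
  set (A := a / (16 * b)).
  assert (HA : 0 < A) by (unfold A; apply Rdiv_lt_0_compat; lra).
  set (K := 24 * A + 6 * Rabs beta + 2 * (1 + c) + 2 * Rabs kap + 1).
  set (M := 1 + 2 * K / a + 4 * Rabs (u 1%nat) / A + 9 * Rabs (u 2%nat) / A).
  assert (HK0 : 0 <= K) by (unfold K; pose proof (Rabs_pos beta); pose proof (Rabs_pos kap); lra).
  assert (T1' : 0 <= 2 * K / a) by (apply Rmult_le_pos; [lra| apply Rlt_le, Rinv_0_lt_compat; lra]).
  assert (T2' : 0 <= 4 * Rabs (u 1%nat) / A) by (apply Rmult_le_pos; [pose proof (Rabs_pos (u 1%nat)); lra| apply Rlt_le, Rinv_0_lt_compat; lra]).
  assert (T3' : 0 <= 9 * Rabs (u 2%nat) / A) by (apply Rmult_le_pos; [pose proof (Rabs_pos (u 2%nat)); lra| apply Rlt_le, Rinv_0_lt_compat; lra]).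
  assert (HM : 1 <= M) by (unfold M; lra).
  assert (HKM : K <= a / 2 * M).
  { assert (a / 2 * (2 * K / a) = K) by (field; lra).
    assert (a / 2 * M >= a / 2 * (2 * K / a)). 
    { apply Rle_ge, Rmult_le_compat_l; [lra|]. unfold M; lra. }
    lra. }
  assert (Hu1 : Rabs (u 1%nat) <= Bnd A M 1).
  { unfold Bnd. simpl INR. 
    assert (Rabs (u 1%nat) <= A * M / 4).
    { assert (A * (4 * Rabs (u 1%nat) / A) = 4 * Rabs (u 1%nat)) by (field; lra).
      assert (A * M >= A * (4 * Rabs (u 1%nat) / A)) by (apply Rle_ge, Rmult_le_compat_l; [lra| unfold M; lra]).
      lra. }
    replace (A * M ^ 1 / (1 + 1) ^ 2) with (A * M / 4) by (simpl; field). lra. }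
  assert (Hu2 : Rabs (u 2%nat) <= Bnd A M 2).
  { unfold Bnd. 
    assert (Rabs (u 2%nat) <= A * M / 9).
    { assert (A * (9 * Rabs (u 2%nat) / A) = 9 * Rabs (u 2%nat)) by (field; lra).
      assert (A * M >= A * (9 * Rabs (u 2%nat) / A)) by (apply Rle_ge, Rmult_le_compat_l; [lra| unfold M; lra]).
      lra. }
    replace (INR 2 + 1) with 3 by (simpl; ring).
    assert (A * M <= A * M ^ 2) by (apply Rmult_le_compat_l; [lra| simpl; nra]).
    lra. }
  assert (Hall : forall j, (1 <= j)%nat -> Rabs (u j) <= Bnd A M j).
  { intros j Hj. apply (useq_bound a b c kap beta A M Ha Hb Hc eq_refl HM HKM Hu1 Hu2 j j). lia. }
  assert (Hrad : Rbar_le (/ M) (CV_radius u)).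
  { apply (radius_bound u A M (Rabs beta)); try lra. unfold u; rewrite useq_0; lra. exact Hall. }
  assert (HM0 : 0 < / M) by (apply Rinv_0_lt_compat; lra).
  assert (Hin : forall x, Rabs x < / M -> Rbar_lt (Rabs x) (CV_radius u)).
  { intros x Hx. eapply Rbar_lt_le_trans; [|exact Hrad]. simpl. exact Hx. }
  assert (Lus : is_lim (fun V => PSeries u (V - 1)) 1 beta).
  { replace beta with (PSeries u (1 - 1)).
    - apply (is_lim_continuity (fun V => PSeries u (V - 1)) 1).
      apply (continuity_pt_comp (fun V => V - 1) (PSeries u) 1).
      + apply continuity_pt_minus; [apply continuity_pt_id| apply continuity_pt_const; intros ? ?; reflexivity].
      + apply PSeries_continuity. apply Hin. rewrite Rminus_eq_0, Rabs_R0. exact HM0.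
    - rewrite Rminus_eq_0, PSeries_0. reflexivity. }
  set (gf := fun V => PSeries u (V - 1) * ((V - 1) + b) - (c + (1 + c) * (V - 1) + (V - 1) * (V - 1))).
  assert (Lg : is_lim gf 1 a).
  { eapply is_lim_val. unfold gf. lim_tac. rewrite Rminus_eq_0. 
    replace (beta * (0 + b)) with (b * beta) by ring. rewrite Hbb. ring. }
  destruct (lim_pos gf a Lg Ha) as [dg [Hdg Hgpos]].
  set (delta := Rmin (/ M) dg).
  assert (Hdel : 0 < delta) by (apply Rmin_pos; lra).
  assert (Hd1 : delta <= / M) by apply Rmin_l.
  assert (Hd2 : delta <= dg) by apply Rmin_r.
  set (h := fun V => PSeries (PS_incr_1 u) (V + - 1)).
  assert (Hder : forall V, Rabs (V - 1) < delta -> is_derive h V (PSeries (wt u) (V - 1))).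
  { intros V HV. unfold h.
    assert (Hr : Rbar_lt (Rabs (V + - 1)) (CV_radius (PS_incr_1 u))).
    { rewrite CV_radius_incr_1. apply Hin. change (V + - 1) with (V - 1). lra. }
    eapply is_derive_ext. intros t; reflexivity.
    replace (PSeries (wt u) (V - 1)) with (scal 1 (PSeries (PS_derive (PS_incr_1 u)) (V + - 1))).
    - apply (is_derive_comp (PSeries (PS_incr_1 u)) (fun V => V + - 1) V).
      + apply is_derive_PSeries. exact Hr.
      + auto_derive; auto.
    - unfold scal; simpl; unfold mult; simpl. rewrite Rmult_1_l. apply PSeries_ext. intros n. reflexivity. }
  assert (Hh1 : h 1 = 0) by (unfold h; rewrite Rplus_opp_r, PSeries_0; reflexivity).
  exists delta, h. split; [|split].
  - split; [exact Hdel|]. split; [exact Hh1|]. split.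
    + intros V HV. eexists. apply Hder, HV.
    + intros V [HV0 HV].
      set (x := V - 1).
      assert (Hx0 : x <> 0) by (intro E; unfold x in E; rewrite E, Rabs_R0 in HV0; lra).
      assert (Hxr : Rbar_lt (Rabs x) (CV_radius u)) by (apply Hin; unfold x; lra).
      assert (Eh : h V = x * PSeries u x) by (unfold h; rewrite PSeries_incr_1; reflexivity).
      assert (Hgp : 0 < gf V) by (apply Hgpos; split; lra).
      assert (EG : Gfun gamma mu (h V) V = x * gf V).
      { rewrite Eh. unfold Gfun, gf. fold x. unfold b, c. replace V with (x + 1) by (unfold x; ring). ring. }
      assert (Hid := series_identity a b c kap beta x Hbb Ha Hc Hxr). fold u in Hid.
      split.
      * rewrite EG. intro E. apply Rmult_integral in E. destruct E; lra.
      * rewrite (is_derive_unique h V _ (Hder V ltac:(lra))). fold x.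
        rewrite EG. unfold Ffun. rewrite Eh.
        assert (Ep : V ^ 2 - k1 gamma mu * V + mu = x * x + kap * x - a / 2).
        { pose proof (k1_rel gamma mu). unfold kap, a. replace V with (x + 1) by (unfold x; ring). 
          simpl. lra. }
        assert (EF : 2 * (x * PSeries u x) * (x * PSeries u x - (x * x + kap * x - a / 2))
                     = x * (PSeries (wt u) x * gf V)).
        { unfold gf. fold x. rewrite Hid. ring. }
        rewrite Ep, EF. field. split; lra.
  - rewrite (is_derive_unique h 1 _ (Hder 1 ltac:(rewrite Rminus_eq_0, Rabs_R0; lra))).
    rewrite Rminus_eq_0, PSeries_0. unfold wt. fold u. unfold u. rewrite useq_0. simpl. unfold beta, b, c. ring.
  - intros n V HV. unfold h. apply ex_derive_n_comp_trans. apply ex_derive_n_PSeries.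
    rewrite CV_radius_incr_1. apply Hin. change (V + - 1) with (V - 1). lra.
Qed.


Lemma zero_curve gamma mu : 1 < gamma < 3 -> 0 < mu < 1 ->
  integral_curve_through_B gamma mu (1 - mu) (fun _ => 0).
Proof.
  intros Hg Hm. split; [lra|]. split; [reflexivity|]. split.
  - intros U _. apply ex_derive_const.
  - intros U [H0 H1]. 
    assert (HU : U <> 1) by (intro E; subst; rewrite Rminus_eq_0, Rabs_R0 in H0; lra).
    assert (HUm : mu < U) by (apply Rabs_def2 in H1; lra).
    assert (HG : Gfun gamma mu 0 U <> 0).
    { unfold Gfun. intro E.
      assert (U * (U - 1) * (U - mu) = 0) by lra.
      apply Rmult_integral in H. destruct H as [H|H]; [apply Rmult_integral in H; destruct H|]; lra. }
    split; auto. rewrite Derive_const. unfold Ffun. field. auto.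
Qed.

Theorem lemma4p5 (gamma mu : R) (Hg : 1 < gamma < 3) (Hm : 0 < mu < 1) :
  let C1 := 0 in
  let C2 := gamma * (1 - mu) / (1 + k2 gamma mu) in
  (* the two slopes (branches) are distinct *)
  C1 <> C2 /\
  (* every integral curve through B arrives along one of the two branches *)
  (forall delta h, integral_curve_through_B gamma mu delta h ->
     Derive h 1 = C1 \/ Derive h 1 = C2) /\
  (* along each branch: existence of a smooth integral curve, and uniqueness *)
  (forall c, c = C1 \/ c = C2 ->
     (exists delta h, integral_curve_through_B gamma mu delta h /\
        Derive h 1 = c /\ smooth_near_1 delta h) /\
     (forall delta1 h1 delta2 h2,
        integral_curve_through_B gamma mu delta1 h1 ->
        integral_curve_through_B gamma mu delta2 h2 ->
        Derive h1 1 = c -> Derive h2 1 = c ->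
        exists eps, 0 < eps /\ forall U, Rabs (U - 1) < eps -> h1 U = h2 U)) /\
  (* the slope-0 integral curve is H = 0 *)
  (exists delta, integral_curve_through_B gamma mu delta (fun _ => 0)) /\
  (forall delta h, integral_curve_through_B gamma mu delta h -> Derive h 1 = C1 ->
     exists eps, 0 < eps /\ forall U, Rabs (U - 1) < eps -> h U = 0).
Proof.
  intros C1 C2.
  pose proof (k2_pos gamma mu Hg Hm) as Hk2.
  assert (HC2 : 0 < C2).
  { unfold C2. apply Rdiv_lt_0_compat; [apply Rmult_lt_0_compat|]; lra. }
  assert (HZ := zero_curve gamma mu Hg Hm).
  assert (Hnd : forall m, m = C1 \/ m = C2 -> m * (1 + k2 gamma mu) - (1 - mu) <> 0).
  { intros m [->| ->]; unfold C1, C2.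
    - lra.
    - replace (gamma * (1 - mu) / (1 + k2 gamma mu) * (1 + k2 gamma mu) - (1 - mu))
        with ((gamma - 1) * (1 - mu)) by (field; lra).
      assert (0 < (gamma - 1) * (1 - mu)) by (apply Rmult_lt_0_compat; lra). lra. }
  split; [unfold C1; lra|].
  split.
  { intros delta h Hc.
    pose proof (classify gamma mu delta h Hg Hm Hc) as E. simpl in E.
    set (m := Derive h 1) in *.
    assert (E' : m * (m * (1 + k2 gamma mu) - (1 - mu) - (gamma - 1) * (1 - mu)) = 0) by (rewrite Rmult_minus_distr_l, E; ring).
    apply Rmult_integral in E'. destruct E' as [E'|E']; [left; exact E'|right].
    unfold C2. apply (Rmult_eq_reg_r (1 + k2 gamma mu)); [|lra].
    field_simplify; [|lra]. lra. }
  split.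
  { intros c Hcc. split.
    - destruct Hcc as [->| ->].
      + exists (1 - mu), (fun _ => 0). split; [exact HZ|]. split.
        * apply Derive_const.
        * intros n U _. apply ex_derive_n_const.
      + apply exists_C2; auto.
    - intros delta1 h1 delta2 h2 H1 H2 E1 E2.
      apply (uniq gamma mu delta1 h1 delta2 h2 c Hg Hm H1 H2 E1 E2).
      apply Hnd. exact Hcc. }
  split.
  { exists (1 - mu). exact HZ. }
  intros delta h Hc E.
  apply (uniq gamma mu delta h (1 - mu) (fun _ => 0) C1 Hg Hm Hc HZ E).
  - apply Derive_const.
  - apply Hnd. left; reflexivity.
Qed.
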